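(* Let $A$ be a partially ordered set and $G,H$ games over $A$. If $G=\{G^L\mid G^R\}$ is composite, then $H\lhd G$ if and only if $G\equiv\{H,G^L\mid G^R\}$ (the game obtained from $G$ by adding $H$ as an additional left option). Dually, if $H=\{H^L\mid H^R\}$ is composite, then $H\lhd G$ if and only if $H\equiv\{H^L\mid H^R,G\}$ (the game obtained from $H$ by adding $G$ as an additional right option).
   Context: Games over a poset $A$ are defined inductively: for each $a\in A$ there is an atomic game $[a]$, which has no options; and if $L$ and $R$ are non-empty sets of games, then $\{L\mid R\}$ is a composite game with left options $L$ and right options $R$; we write $\{G^L\mid G^R\}$ for a game with typical left option $G^L$ and right option $G^R$. The relations $\le$ and $\lhd$ are defined by simultaneous recursion: $G\le H$ iff (1) every left option $G^L$ of $G$ satisfies $G^L\lhd H$, (2) every right option $H^R$ of $H$ satisfies $G\lhd H^R$, and (3) if $G$ or $H$ is atomic then $G\lhd H$; and $G\lhd H$ iff (1) some right option $G^R$ of $G$ satisfies $G^R\le H$, or (2) some left option $H^L$ of $H$ satisfies $G\le H^L$, or (3) $G=[a]$, $H=[b]$ are atomic and $a\le b$. $G\equiv H$ means $G\le H$ and $H\le G$. *)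

(* Defs.v *)
From mathcomp Require Import all_boot all_order.
Set Implicit Arguments. Unset Strict Implicit. Unset Printing Implicit Defensive.
Import Order.Theory.

(* Games over a poset A.  A composite game {L | R} is given by two
   non-empty index types IL, IR and families of options gl : IL -> game,
   gr : IR -> game (the sets L, R are the images of gl, gr). *)
Inductive game (A : Type) : Type :=
| Atom : A -> game A
| Comp : forall (IL IR : Type), inhabited IL -> inhabited IR ->
    (IL -> game A) -> (IR -> game A) -> game A.

Arguments Atom {A} a.
Arguments Comp {A IL IR} hL hR gl gr.

Definition is_atomic {A : Type} (G : game A) : Prop :=
  match G with Atom _ => True | Comp _ _ _ _ _ _ => False end.

Section Rel.
Context {d : Order.disp_t} {A : porderType d}.

Fixpoint rel (G : game A) : game A -> Prop * Prop :=
  fix relG (H : game A) : Prop * Prop :=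
    let lhd :=
      (match G with
       | Comp _ _ _ _ _ gr => exists j, (rel (gr j) H).1
       | Atom _ => False end)
      \/ (match H with
          | Comp _ _ _ _ hl _ => exists i, (relG (hl i)).1
          | Atom _ => False end)
      \/ (match G, H with
          | Atom a, Atom b => (a <= b)%O
          | _, _ => False end) in
    let le :=
      (match G with
       | Comp _ _ _ _ gl _ => forall i, (rel (gl i) H).2
       | Atom _ => True end)
      /\ (match H with
          | Comp _ _ _ _ _ hr => forall j, (relG (hr j)).2
          | Atom _ => True end)
      /\ ((is_atomic G \/ is_atomic H) -> lhd) in
    (le, lhd).

Definition game_le (G H : game A) : Prop := (rel G H).1.
Definition game_lhd (G H : game A) : Prop := (rel G H).2.
Definition game_equiv (G H : game A) : Prop := game_le G H /\ game_le H G.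

End Rel.

Definition add_left {A : Type} {IL : Type} (X : game A) (gl : IL -> game A)
  : option IL -> game A :=
  fun o => match o with None => X | Some i => gl i end.

Definition add_right {A : Type} {IR : Type} (X : game A) (gr : IR -> game A)
  : option IR -> game A :=
  fun o => match o with None => X | Some j => gr j end.

(* Main.v *)
Require Import Defs.
From mathcomp Require Import all_boot all_order.

Section S.
Context {d : Order.disp_t} {A : porderType d}.

Lemma le_CC (IL IR JL JR : Type) hL hR hL' hR' (gl : IL -> game A) (gr : IR -> game A)
  (hl : JL -> game A) (hr : JR -> game A) :
  game_le (Comp hL hR gl gr) (Comp hL' hR' hl hr) <->
  (forall i, game_lhd (gl i) (Comp hL' hR' hl hr)) /\
  (forall j, game_lhd (Comp hL hR gl gr) (hr j)).
Proof.
  unfold game_le, game_lhd; simpl; split.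
  - intros [H1 [H2 _]]; split; assumption.
  - intros [H1 H2]; split; [|split]; try assumption; intros [[]|[]].
Qed.

Lemma lhd_CR (IL IR : Type) hL hR (gl : IL -> game A) (gr : IR -> game A) K j :
  game_le (gr j) K -> game_lhd (Comp hL hR gl gr) K.
Proof. intro h; unfold game_lhd; destruct K; simpl; left; exists j; exact h. Qed.

Lemma lhd_LC (IL IR : Type) hL hR (gl : IL -> game A) (gr : IR -> game A) K i :
  game_le K (gl i) -> game_lhd K (Comp hL hR gl gr).
Proof. intro h; unfold game_lhd; destruct K; simpl; right; left; exists i; exact h. Qed.

Lemma le_refl (G : game A) : game_le G G.
Proof.
  induction G as [a|IL IR hL hR gl IHl gr IHr].
  - unfold game_le; simpl; split; [exact I|split; [exact I|]].
    intros _; right; right; apply Order.POrderTheory.lexx.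
  - apply le_CC; split.
    + intro i; eapply lhd_LC; apply IHl.
    + intro j; eapply lhd_CR; apply IHr.
Qed.
End S.

Theorem lemma4p10 (d : Order.disp_t) (A : porderType d) :
  (forall (IL IR : Type) (hL : inhabited IL) (hR : inhabited IR)
          (gl : IL -> game A) (gr : IR -> game A) (H : game A),
     game_lhd H (Comp hL hR gl gr) <->
     game_equiv (Comp hL hR gl gr)
                (Comp (inhabits (@None IL)) hR (add_left H gl) gr))
  /\
  (forall (IL IR : Type) (hL : inhabited IL) (hR : inhabited IR)
          (hl : IL -> game A) (hr : IR -> game A) (G : game A),
     game_lhd (Comp hL hR hl hr) G <->
     game_equiv (Comp hL hR hl hr)
                (Comp hL (inhabits (@None IR)) hl (add_right G hr))).
Proof.
  split.
  - intros IL IR hL hR gl gr H; split.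
    + intro hH; split; apply le_CC; split.
      * intro i; apply (@lhd_LC _ _ _ _ _ _ _ _ _ (Some i)); apply le_refl.
      * intro j; apply (@lhd_CR _ _ _ _ _ _ _ _ _ j); apply le_refl.
      * intros [i|]; [apply (@lhd_LC _ _ _ _ _ _ _ _ _ i); apply le_refl | exact hH].
      * intro j; apply (@lhd_CR _ _ _ _ _ _ _ _ _ j); apply le_refl.
    + intros [_ h2]; apply le_CC in h2; destruct h2 as [h2 _]; exact (h2 None).
  - intros IL IR hL hR hl hr G; split.
    + intro hG; split; apply le_CC; split.
      * intro i; apply (@lhd_LC _ _ _ _ _ _ _ _ _ i); apply le_refl.
      * intros [j|]; [apply (@lhd_CR _ _ _ _ _ _ _ _ _ j); apply le_refl | exact hG].
      * intro i; apply (@lhd_LC _ _ _ _ _ _ _ _ _ i); apply le_refl.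
      * intro j; apply (@lhd_CR _ _ _ _ _ _ _ _ _ (Some j)); apply le_refl.
    + intros [h1 _]; apply le_CC in h1; destruct h1 as [_ h1]; exact (h1 None).
Qed.
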